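(* Let $\Omega\subseteq\mathbb{R}^N$ be a domain, $\mathcal{D}\subseteq \Omega\times\mathbb{R}\times\mathbb{R}^N\times\mathbb{S}(N)$, and $F:\mathcal{D}\to\mathbb{R}$ degenerate elliptic. Class U is a proper subset of Class M. In particular, suppose $F$ belongs to Class U, with constant $\lambda>0$ and locally bounded function $H$. Fix $\omega\in\Omega\times\mathbb{R}\times\mathbb{R}^N$. Then the functions $$g_1(t,M)=\lambda t-\lambda\,\lambda_1(M)-H(\omega)-F(\omega,M)\quad\text{(for $M$ with $(\omega,M)\in\mathcal{D}$)},$$ $$g_2(t,M)=\lambda t+\lambda\,\lambda_1(M)+H(\omega)-F(\omega,-M)\quad\text{(for $M$ with $(\omega,-M)\in\mathcal{D}$)},$$ $t\in\mathbb{R}$, satisfy properties (1)–(4) in the definition of Class M for this $\omega$, thus verifying membership of $F$ in Class M.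
   Context: $\mathbb{S}(N)$ is the space of real symmetric $N\times N$ matrices with the Löwner order ($A\le B$ iff $\langle Ax,x\rangle\le\langle Bx,x\rangle$ for all $x$). For $X\in\mathbb{S}(N)$, $\lambda_1(X)\le\dots\le\lambda_N(X)$ are its eigenvalues in increasing order. $F:\mathcal{D}\to\mathbb{R}$ is degenerate elliptic if for every $\omega\in\mathbb{R}^N\times\mathbb{R}\times\mathbb{R}^N$ with $(\omega,X),(\omega,Y)\in\mathcal{D}$, $X\le Y$ implies $F(\omega,X)\ge F(\omega,Y)$. Class U: $F$ is continuous in its matrix entry, and there exist $\lambda>0$ and a locally bounded function $H$ such that for all $\omega\in\Omega\times\mathbb{R}\times\mathbb{R}^N$, whenever $(\omega,B),(\omega,M)\in\mathcal{D}$ and $B\le M$, we have $F(\omega,B)-F(\omega,M)\ge\lambda\operatorname{tr}(M-B)+H(\omega)$. Class M: $F$ is continuous in its matrix entry, and for every $\omega\in\Omega\times\mathbb{R}\times\mathbb{R}^N$ and sets $\mathcal{S}_1,\mathcal{S}_2\subseteq\mathbb{S}(N)$ with $\{\omega\}\times\mathcal{S}_i\subseteq\mathcal{D}$, there exist $g_i:\mathbb{R}\times\mathcal{S}_i\to\mathbb{R}$ (possibly depending on $\omega$) such that: (1) for each fixed $M_0\in\mathcal{S}_i$, $t\mapsto g_i(t,M_0)$ is an increasing bijection $\mathbb{R}\to\mathbb{R}$, with inverse denoted $s\mapsto g_i(-,M_0)^{-1}(s)$; (2) $M\mapsto g_i(-,M)^{-1}(0)$ is continuous on $\mathcal{S}_i$;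 (3) for $M\in\mathcal{S}_1$, if $(\omega,X)\in\mathcal{D}$ and $X\le M$ then $-F(\omega,X)\le g_1(\lambda_1(X),M)$; (4) for $M\in\mathcal{S}_2$, if $(\omega,Y)\in\mathcal{D}$ and $-Y\le M$ then $-F(\omega,Y)\ge g_2(\lambda_N(Y),M)$.
   Formalization: In Class M, and in the claim about g₁ and g₂, the set $\mathcal{S}_2$ satisfies $\{\omega\}\times(-\mathcal{S}_2)\subseteq\mathcal{D}$ in place of $\{\omega\}\times\mathcal{S}_2\subseteq\mathcal{D}$. The statement above fails without it. *)

(* Defs.v *)
From HB Require Import structures.
From mathcomp Require Import all_boot all_order all_algebra.
From mathcomp Require Import all_classical all_reals all_analysis.
Set Implicit Arguments. Unset Strict Implicit. Unset Printing Implicit Defensive.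
Import Order.TTheory GRing.Theory Num.Theory.
Import numFieldNormedType.Exports.
Local Open Scope classical_set_scope.
Local Open Scope ring_scope.

Section Defs.
Variables (R : realType) (N : nat).

Definition omega := ('rV[R]_N * R * 'rV[R]_N)%type.

Definition symmetric (A : 'M[R]_N) : Prop := A^T = A.

Definition loewner (A B : 'M[R]_N) : Prop :=
  forall x : 'cV[R]_N, (x^T *m A *m x) 0 0 <= (x^T *m B *m x) 0 0.

Definition lam_min (X : 'M[R]_N) : R := inf [set a : R | eigenvalue X a].
Definition lam_max (X : 'M[R]_N) : R := sup [set a : R | eigenvalue X a].

Definition is_domain (Om : set 'rV[R]_N) : Prop :=
  Om !=set0 /\ open Om /\ connected Om.

Definition in_Omega3 (Om : set 'rV[R]_N) (w : omega) : Prop := Om w.1.1.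

Definition admissible_dom (Om : set 'rV[R]_N) (D : set (omega * 'M[R]_N)) :=
  forall w X, D (w, X) -> in_Omega3 Om w /\ symmetric X.

Definition degenerate_elliptic (D : set (omega * 'M[R]_N))
  (F : omega -> 'M[R]_N -> R) : Prop :=
  forall w X Y, D (w, X) -> D (w, Y) -> loewner X Y -> F w Y <= F w X.

Definition mat_continuous (D : set (omega * 'M[R]_N))
  (F : omega -> 'M[R]_N -> R) : Prop :=
  forall w, {within [set X | D (w, X)], continuous (F w)}.

Definition locally_bounded (Om : set 'rV[R]_N) (H : omega -> R) : Prop :=
  forall w, in_Omega3 Om w -> exists C : R, \forall z \near w, `|H z| <= C.

Definition classU_ineq (Om : set 'rV[R]_N) (D : set (omega * 'M[R]_N))
  (F : omega -> 'M[R]_N -> R) (lam : R) (H : omega -> R) : Prop :=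
  forall w B M, in_Omega3 Om w -> D (w, B) -> D (w, M) -> loewner B M ->
    lam * \tr (M - B) + H w <= F w B - F w M.

Definition classU (Om : set 'rV[R]_N) (D : set (omega * 'M[R]_N))
  (F : omega -> 'M[R]_N -> R) : Prop :=
  mat_continuous D F /\
  exists (lam : R) (H : omega -> R),
    0 < lam /\ locally_bounded Om H /\ classU_ineq Om D F lam H.

(* g(-,M)^{-1}(0): the (unique, when g(-,M) is a bijection) zero of g(-,M) *)
Definition inv0 (g : R -> 'M[R]_N -> R) (M : 'M[R]_N) : R :=
  xget 0 [set t : R | g t M = 0].

Definition classM_props (D : set (omega * 'M[R]_N))
  (F : omega -> 'M[R]_N -> R) (w : omega) (S1 S2 : set 'M[R]_N)
  (g1 g2 : R -> 'M[R]_N -> R) : Prop :=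
  (* (1) *)
  (forall M0, S1 M0 ->
     {homo (fun t => g1 t M0) : s t / s < t} /\ bijective (fun t => g1 t M0)) /\
  (forall M0, S2 M0 ->
     {homo (fun t => g2 t M0) : s t / s < t} /\ bijective (fun t => g2 t M0)) /\
  (* (2) *)
  {within S1, continuous (inv0 g1)} /\
  {within S2, continuous (inv0 g2)} /\
  (* (3) *)
  (forall M X, S1 M -> D (w, X) -> loewner X M -> - F w X <= g1 (lam_min X) M) /\
  (* (4) *)
  (forall M Y, S2 M -> D (w, Y) -> loewner (- Y) M -> g2 (lam_max Y) M <= - F w Y).

Definition classM (Om : set 'rV[R]_N) (D : set (omega * 'M[R]_N))
  (F : omega -> 'M[R]_N -> R) : Prop :=
  mat_continuous D F /\
  forall w, in_Omega3 Om w ->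
  forall S1 S2 : set 'M[R]_N,
    (forall M, S1 M -> D (w, M)) -> (forall M, S2 M -> D (w, - M)) ->
    exists g1 g2 : R -> 'M[R]_N -> R, classM_props D F w S1 S2 g1 g2.

End Defs.

(* Main.v *)
Require Import Defs.
From HB Require Import structures.
From mathcomp Require Import all_boot all_order all_algebra.
From mathcomp Require Import all_classical all_reals all_analysis.
Import Order.TTheory GRing.Theory Num.Theory.
Import numFieldNormedType.Exports.
Local Open Scope classical_set_scope.
Local Open Scope ring_scope.
From mathcomp Require Import lra ring.
Set Implicit Arguments. Unset Strict Implicit.
Section S.
Variables (R : realType) (n : nat).
Implicit Types (A B P : 'M[R]_n) (v x y : 'rV[R]_n).

Definition qf A v : R := (v *m A *m v^T) 0 0.
Definition nrm2 v : R := (v *m v^T) 0 0.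

Lemma qfE A v : qf A v = \sum_i \sum_j v 0 i * A i j * v 0 j.
Proof.
rewrite /qf mxE [RHS]exchange_big; apply: eq_bigr => j _; rewrite !mxE big_distrl /=.
by apply: eq_bigr => i _; rewrite ?mxE.
Qed.

Lemma nrm2E v : nrm2 v = \sum_i v 0 i ^+ 2.
Proof. by rewrite /nrm2 mxE; apply: eq_bigr => i _; rewrite !mxE expr2. Qed.

Lemma nrm2_ge0 v : 0 <= nrm2 v.
Proof. by rewrite nrm2E; apply: sumr_ge0 => i _; apply: sqr_ge0. Qed.

Lemma nrm2_eq0 v : nrm2 v = 0 -> v = 0.
Proof.
rewrite nrm2E => /eqP; rewrite psumr_eq0 => [/allP H|i _]; last exact: sqr_ge0.
apply/rowP => i; rewrite !mxE.
by have := H i (mem_index_enum _); rewrite sqrf_eq0 => /eqP.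
Qed.

Lemma coord_le1 v i : nrm2 v = 1 -> `|v 0 i| <= 1.
Proof.
rewrite nrm2E (bigD1 i) //= => h.
have : v 0 i ^+ 2 <= 1.
  rewrite -h lerDl; apply: sumr_ge0 => j _; exact: sqr_ge0.
move=> h2; rewrite ler_norml; apply/andP; split; nra.
Qed.

Lemma qfD A B v : qf (A + B) v = qf A v + qf B v.
Proof. by rewrite /qf mulmxDr mulmxDl mxE. Qed.

Lemma qfN A v : qf (- A) v = - qf A v.
Proof. by rewrite /qf mulmxN mulNmx mxE. Qed.

Lemma qfB A B v : qf (A - B) v = qf A v - qf B v.
Proof. by rewrite qfD qfN. Qed.

Lemma qf_scalar (a : R) v : qf a%:M v = a * nrm2 v.
Proof. by rewrite /qf mul_mx_scalar -scalemxAl mxE. Qed.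

Lemma qf_eig A v (a : R) : v *m A = a *: v -> qf A v = a * nrm2 v.
Proof. by move=> h; rewrite /qf h -scalemxAl mxE. Qed.

Lemma qfZ A (c : R) v : qf A (c *: v) = c ^+ 2 * qf A v.
Proof.
by rewrite /qf -scalemxAl linearZ /= -scalemxAr -scalemxAl !mxE mulrA expr2.
Qed.

Lemma nrm2Z (c : R) v : nrm2 (c *: v) = c ^+ 2 * nrm2 v.
Proof.
by rewrite /nrm2 linearZ /= -scalemxAr -scalemxAl !mxE mulrA expr2.
Qed.


Lemma cont_sum (T : topologicalType) (I : Type) (r : seq I) (f : I -> T -> R) :
  (forall i, continuous (f i)) -> continuous (fun t : T => \sum_(i <- r) f i t).
Proof.
move=> hf; elim: r => [|a r IH].
  have -> : (fun t : T => \sum_(i <- [::]) f i t) = fun=> 0.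
    by apply/funext => t; rewrite big_nil.
  by move=> t; apply: cst_continuous.
have -> : (fun t : T => \sum_(i <- a :: r) f i t) = fun t => f a t + \sum_(i <- r) f i t.
  by apply/funext => t; rewrite big_cons.
move=> t; exact: (continuousD (hf a t) (IH t)).
Qed.

Lemma coord_cont i : continuous (fun v : 'rV[R]_n => v 0 i).
Proof. exact: coord_continuous. Qed.

Lemma qf_cont A : continuous (qf A).
Proof.
have -> : qf A = fun v => \sum_i \sum_j v 0 i * A i j * v 0 j.
  by apply/funext => v; exact: qfE.
apply: cont_sum => i; apply: cont_sum => j x.
apply: (@continuousM _ _ (fun v : 'rV[R]_n => v 0 i * A i j) (fun v => v 0 j)).
  apply: (@continuousM _ _ (fun v : 'rV[R]_n => v 0 i) (fun v => A i j)).
    exact: coord_cont.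
  exact: cst_continuous.
exact: coord_cont.
Qed.

Lemma nrm2_cont : continuous (@nrm2).
Proof.
have -> : @nrm2 = fun v => \sum_i v 0 i ^+ 2.
  by apply/funext => v; exact: nrm2E.
apply: cont_sum => i x.
have -> : (fun v : 'rV[R]_n => v 0 i ^+ 2) = fun v => v 0 i * v 0 i.
  by apply/funext => v; rewrite expr2.
apply: (@continuousM _ _ (fun v : 'rV[R]_n => v 0 i) (fun v => v 0 i)); exact: coord_cont.
Qed.

Definition bf A (u w : 'rV[R]_n) : R := (u *m A *m w^T) 0 0.

Lemma qf_expand A (u w : 'rV[R]_n) (t : R) :
  qf A (u + t *: w) = qf A u + t * (bf A u w + bf A w u) + t ^+ 2 * qf A w.
Proof.
rewrite /qf /bf.
have -> : (u + t *: w) *m A *m (u + t *: w)^T =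
   u *m A *m u^T + t *: (u *m A *m w^T + w *m A *m u^T) + t ^+ 2 *: (w *m A *m w^T).
  rewrite linearD /= linearZ /= !mulmxDl !mulmxDr -!scalemxAl -!scalemxAr.
  by rewrite scalerA -expr2 scalerDr !addrA; congr (_ + _); rewrite -!addrA; congr (_ + _); rewrite addrC.
set a := u *m A *m u^T; set b := u *m A *m w^T; set c := w *m A *m u^T; set d := w *m A *m w^T.
by rewrite !mxE.
Qed.

Lemma bf_sym P (u w : 'rV[R]_n) : P^T = P -> bf P w u = bf P u w.
Proof.
move=> hP; rewrite /bf. transitivity (((w *m P *m u^T)^T) 0 0); first by rewrite [RHS]mxE.
by rewrite !trmx_mul trmxK hP mulmxA.
Qed.

Lemma qf0 A : qf A 0 = 0.
Proof. by rewrite /qf !mul0mx mxE. Qed.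

Hypothesis hn : (0 < n)%N.

Lemma rayleigh A : A^T = A ->
  exists c, [/\ nrm2 c = 1, c *m A = lam_min A *: c &
                forall x, lam_min A * nrm2 x <= qf A x].
Proof.
move=> hA.
pose i0 := Ordinal hn.
pose S := [set v : 'rV[R]_n | nrm2 v = 1].
have S0 : S !=set0.
  exists (delta_mx 0 i0); rewrite /S /= nrm2E (bigD1 i0) //= big1 ?addr0.
    by rewrite !mxE !eqxx expr1n.
  by move=> i /negbTE hi; rewrite !mxE hi andbF expr0n.
have cS : compact S.
  have hcl : closed S.
    have -> : S = nrm2 @^-1` [set x | x = 1] by [].
    by apply: (continuous_closedP _).1; [exact: nrm2_cont | exact: closed_eq].
  have hbox : compact [set v : 'rV[R]_n | forall i, `[(-1 : R), 1]%classic (v ord0 i)].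
    by apply: (@rV_compact _ _ (fun=> `[(-1 : R), 1]%classic)) => i; exact: segment_compact.
  apply: (subclosed_compact hcl hbox).
  move=> v /= hv i; rewrite in_itv /= -ler_norml.
  exact: coord_le1.
have [c cS' hmin] := EVT_min_rV S0 cS (continuous_subspaceT (@qf_cont A)).
have c1 : nrm2 c = 1 by move: cS'; rewrite inE.
set m := qf A c.
have low : forall x, m * nrm2 x <= qf A x.
  move=> x; case: (eqVneq (nrm2 x) 0) => [h|h].
    by rewrite h mulr0 (nrm2_eq0 h) qf0.
  have hp : 0 < nrm2 x by rewrite lt_neqAle eq_sym h nrm2_ge0.
  pose s := Num.sqrt (nrm2 x).
  have hs : 0 < s by rewrite sqrtr_gt0.
  have hs2 : s ^+ 2 = nrm2 x by rewrite sqr_sqrtr // ltW.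
  have Sy : (s^-1 *: x) \in S.
    by rewrite inE /S /= nrm2Z exprVn hs2 mulVf // gt_eqF.
  have := hmin _ Sy; rewrite qfZ exprVn hs2 ler_pdivlMl //.
  by rewrite mulrC.
pose P := A - m%:M.
have hP : P^T = P by rewrite /P linearB /= tr_scalar_mx hA.
have psd : forall x, 0 <= qf P x.
  by move=> x; rewrite /P qfB qf_scalar subr_ge0.
have qPc : qf P c = 0 by rewrite /P qfB qf_scalar c1 mulr1 subrr.
pose y := c *m P.
have bcy : bf P c y = nrm2 y by [].
have bycy : bf P y c = nrm2 y by rewrite bf_sym.
have y0 : y = 0.
  apply: nrm2_eq0; apply/eqP; rewrite eq_le nrm2_ge0 andbT.
  rewrite leNgt; apply/negP => ha.
  set a := nrm2 y in ha bcy bycy; set b := qf P y.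
  have hb : 0 <= b by exact: psd.
  pose s := (b + 1)^-1.
  have hs1 : s * (b + 1) = 1 by rewrite mulVf // gt_eqF // ltr_wpDl.
  have hs : 0 < s by rewrite invr_gt0 ltr_wpDl.
  have := psd (c + (- (a * s)) *: y).
  rewrite qf_expand qPc bcy bycy -/b => H.
  have H2 : 0 <= a * a * s * (s * b - 2) by nra.
  have : s * b - 2 < 0 by nra.
  have : 0 < a * a * s by rewrite !mulr_gt0.
  nra.
have cA : c *m A = m *: c.
  apply/eqP; rewrite -subr_eq0 -mul_mx_scalar -mulmxBr; exact/eqP.
have c0 : c != 0 by apply/eqP => h; move: c1; rewrite h /nrm2 mul0mx mxE => /eqP; rewrite eq_sym oner_eq0.
have lm : lam_min A = m.
  have Em : [set a | eigenvalue A a] m by apply/eigenvalueP; exists c.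
  have lb : lbound [set a | eigenvalue A a] m.
    move=> a /eigenvalueP [v hv v0].
    have hpv : 0 < nrm2 v.
      rewrite lt_neqAle nrm2_ge0 andbT eq_sym; apply/eqP => h.
      by move/eqP: v0; apply; exact: nrm2_eq0.
    have := low v; rewrite (qf_eig hv) ler_pM2r //.
  apply/le_anti/andP; split.
    by apply: ge_inf => //; exists m.
  by apply: lb_le_inf => //; exists m.
by exists c; rewrite lm; split.
Qed.


Lemma loewner_qf X Y : loewner X Y -> forall v, qf X v <= qf Y v.
Proof. by move=> h v; have := h v^T; rewrite trmxK. Qed.

Lemma tr_bound P v : nrm2 v = 1 -> (forall x, 0 <= qf P x) -> qf P v <= \tr P.
Proof.
move=> v1 psd.
pose Q := 1%:M - v^T *m v.
have hQ : Q *m Q^T = Q.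
  have vv : v *m v^T = 1%:M.
    by apply/matrixP => i j; rewrite !ord1 -[LHS]/(nrm2 v) v1 mxE.
  have WW : (v^T *m v) *m (v^T *m v) = v^T *m v.
    by rewrite mulmxA -(mulmxA v^T v v^T) vv mulmx1.
  rewrite /Q linearB /= tr_scalar_mx trmx_mul trmxK.
  by rewrite mulmxBl !mulmxBr !mul1mx !mulmx1 WW subrr subr0.
have e : 1%:M = v^T *m v + Q *m Q^T by rewrite hQ /Q addrC subrK.
have -> : \tr P = \tr (P *m (v^T *m v + Q *m Q^T)) by rewrite -e mulmx1.
rewrite mulmxDr mxtraceD mulmxA mxtrace_mulC mulmxA.
have -> : \tr (v *m P *m v^T) = qf P v by rewrite /qf /mxtrace big_ord1.
rewrite lerDl mulmxA mxtrace_mulC mulmxA /mxtrace; apply: sumr_ge0 => i _.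
have := psd (row i Q^T).
suff -> : qf P (row i Q^T) = (Q^T *m P *m Q) i i by [].
rewrite /qf -row_mul -row_mul tr_row trmxK.
by rewrite colE mulmxA -colE !mxE.
Qed.

Lemma qf_bound E v : nrm2 v = 1 -> `|qf E v| <= (n * n)%:R * `|E|.
Proof.
move=> v1; rewrite qfE.
apply: (le_trans (ler_norm_sum _ _ _)).
have -> : (n * n)%:R * `|E| = \sum_(i < n) \sum_(j < n) `|E|.
  by rewrite !sumr_const !card_ord -mulrnA mulr_natl.
apply: ler_sum => i _; apply: (le_trans (ler_norm_sum _ _ _)).
apply: ler_sum => j _.
rewrite !normrM.
have hE : `|E i j| <= `|E|.
  have -> : `|E| = mx_norm E by []. rewrite mx_normrE.
  exact: (le_bigmax _ (fun ij : 'I_n * 'I_n => `|E ij.1 ij.2|) (i, j)).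
have hi := coord_le1 i v1; have hj := coord_le1 j v1.
have h0 : 0 <= `|E i j| by [].
have : `|v 0 i| * `|E i j| <= `|E|.
  by rewrite -[X in _ <= X]mul1r; apply: ler_pM.
move=> h1; rewrite -[X in _ <= X]mulr1; apply: ler_pM => //.
Qed.

Lemma lam_min_lip A B : A^T = A -> B^T = B ->
  lam_min A - lam_min B <= (n * n)%:R * `|A - B|.
Proof.
move=> hA hB; have [c [c1 cB _]] := rayleigh hB.
have [c' [_ _ lowA]] := rayleigh hA.
have := lowA c; rewrite c1 mulr1.
have -> : qf A c = qf B c + qf (A - B) c by rewrite qfB addrC subrK.
rewrite (qf_eig cB) c1 mulr1 => h.
rewrite lerBlDl; apply: (le_trans h); rewrite lerD2l.
exact: (le_trans (ler_norm _) (qf_bound _ c1)).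
Qed.

Lemma rayleigh_max Y : Y^T = Y ->
  exists c, nrm2 c = 1 /\ qf Y c = lam_max Y /\ forall x, qf Y x <= lam_max Y * nrm2 x.
Proof.
move=> hY.
have hY' : (- Y)^T = - Y by rewrite linearN /= hY.
have [c [c1 cY low]] := rayleigh hY'.
set m := lam_min (- Y) in cY low.
have E1 : [set a | eigenvalue Y a] (- m).
  apply/eigenvalueP; exists c.
    by apply/eqP; rewrite -eqr_opp -mulmxN cY scaleNr opprK.
  by apply/eqP => h; move: c1; rewrite h /nrm2 mul0mx mxE => /eqP; rewrite eq_sym oner_eq0.
have ub : ubound [set a | eigenvalue Y a] (- m).
  move=> a /eigenvalueP [v hv v0].
  have hpv : 0 < nrm2 v.
    rewrite lt_neqAle nrm2_ge0 andbT eq_sym; apply/eqP => h.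
    by move/eqP: v0; apply; exact: nrm2_eq0.
  by have := low v; rewrite qfN (qf_eig hv) -mulNr ler_pM2r // lerNr.
have lm : lam_max Y = - m.
  apply/le_anti/andP; split.
    by rewrite /lam_max; apply: ge_sup; [exists (- m) | exact: ub].
  by rewrite /lam_max; apply: sup_upper_bound; [split; [exists (- m) | exists (- m)] | ].
exists c; rewrite lm; split => //; split.
  by rewrite -[Y]opprK qfN (qf_eig cY) c1 mulr1.
by move=> x; rewrite mulNr; have := low x; rewrite qfN lerNr.
Qed.


Lemma qf_loewner X Y : (forall v, qf X v <= qf Y v) -> loewner X Y.
Proof. by move=> h x; have := h x^T; rewrite /qf trmxK. Qed.

Lemma lam_min_within_cont (S : set 'M[R]_n) :
  (forall M, S M -> M^T = M) -> {within S, continuous (@lam_min R n)}.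
Proof.
move=> hS; apply/subspace_continuousP => x Sx.
apply/cvgrPdist_le => /= e e0; rewrite near_withinE.
pose K0 : R := (n * n)%:R.
have hK0 : 0 <= K0 by [].
pose d := e / (K0 + 1).
have hK1 : 0 < K0 + 1 by rewrite ltr_wpDl.
have d0 : 0 < d by rewrite divr_gt0.
have hd : (K0 + 1) * d = e by rewrite /d mulrC -mulrA mulVf ?mulr1 // gt_eqF.
have hb : \forall y \near x, `|x - y| < d.
  exact: ((@cvgrPdist_lt _ _ _ (nbhs x) _ id x).1 (@cvg_id _ (nbhs x)) d d0).
apply: filterS hb => y hy Sy.
have l1 := lam_min_lip (hS _ Sx) (hS _ Sy).
have l2 := lam_min_lip (hS _ Sy) (hS _ Sx).
rewrite distrC in l2.
have hn0 : 0 <= `|x - y| by [].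
rewrite ler_norml; apply/andP; split.
  rewrite lerNl opprB; apply: (le_trans l2) => /=; rewrite -/K0; nra.
by apply: (le_trans l1); rewrite -/K0; nra.
Qed.

End S.

Lemma aff (R : realType) (a b : R) (f : R -> R) : 0 < a -> (forall t, f t = a * t + b) ->
  {homo f : s t / s < t} /\ bijective f.
Proof.
move=> ha hf; split.
  by move=> s t st; rewrite !hf ltrD2r ltr_pM2l.
exists (fun s => (s - b) / a) => t; rewrite ?hf.
  by field; rewrite gt_eqF.
by field; rewrite gt_eqF.
Qed.

Lemma symN (R : realType) n (M : 'M[R]_n) : (- M)^T = - M -> M^T = M.
Proof. by rewrite linearN /= => /oppr_inj. Qed.

Lemma inv0_aff (R : realType) n (g : R -> 'M[R]_n -> R) (a : R) (b : 'M[R]_n -> R) M :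
  0 < a -> (forall t, g t M = a * t + b M) -> Defs.inv0 g M = - b M / a.
Proof.
move=> ha hg; rewrite /Defs.inv0; apply: xget_unique => /=.
  by rewrite hg; field; rewrite gt_eqF.
move=> y; rewrite hg => hy.
have -> : y = (a * y) / a by field; rewrite gt_eqF.
by have -> : a * y = - b M by rewrite -(subr0 (a * y)) -hy; ring.
Qed.

Lemma part1 : forall (R : realType) (N : nat) (Om : set 'rV[R]_N)
     (D : set (omega R N * 'M[R]_N)) (F : omega R N -> 'M[R]_N -> R)
     (lam : R) (H : omega R N -> R),
     (0 < N)%N -> is_domain Om -> admissible_dom Om D ->
     degenerate_elliptic D F -> mat_continuous D F ->
     0 < lam -> locally_bounded Om H -> classU_ineq Om D F lam H ->
     (forall w, in_Omega3 Om w ->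
      forall S1 S2 : set 'M[R]_N,
        (forall M, S1 M -> D (w, M)) -> (forall M, S2 M -> D (w, - M)) ->
        classM_props D F w S1 S2
          (fun t M => lam * t - lam * lam_min M - H w - F w M)
          (fun t M => lam * t + lam * lam_min M + H w - F w (- M))) /\
     classM Om D F.
Proof.
move=> R N Om D F lam H hN _ hadm _ hcont hlam _ hU.
have key : forall w, in_Omega3 Om w ->
      forall S1 S2 : set 'M[R]_N,
        (forall M, S1 M -> D (w, M)) -> (forall M, S2 M -> D (w, - M)) ->
        classM_props D F w S1 S2
          (fun t M => lam * t - lam * lam_min M - H w - F w M)
          (fun t M => lam * t + lam * lam_min M + H w - F w (- M)).
  move=> w hw S1 S2 h1 h2.
  have sym1 : forall M, S1 M -> M^T = M by move=> M /h1 /hadm [].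
  have sym2 : forall M, S2 M -> M^T = M by move=> M /h2 /hadm [] _ /symN.
  split; [|split; [|split; [|split; [|split]]]].
  - move=> M0 _; apply: (@aff _ lam (- (lam * lam_min M0) - H w - F w M0)) => // t.
    by rewrite !addrA.
  - move=> M0 _; apply: (@aff _ lam (lam * lam_min M0 + H w - F w (- M0))) => // t.
    by rewrite !addrA.
  - pose f1 := fun M => lam_min M + (H w + F w M) / lam.
    apply: (@subspace_eq_continuous _ S1 _ f1).
      move=> M _; rewrite /from_subspace /f1 (@inv0_aff _ _ _ lam (fun M => - (lam * lam_min M) - H w - F w M) M hlam); last by move=> t; rewrite !addrA.
      by field; rewrite gt_eqF.
    apply/subspace_continuousP => x Sx.
    apply: cvgD.
      exact: ((subspace_continuousP _ _).1 (lam_min_within_cont hN sym1) x Sx).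
    apply: cvgMr_tmp; apply: cvgD; first exact: cvg_cst.
    have h1' : S1 `<=` [set X | D (w, X)] by move=> M /h1.
    exact: ((subspace_continuousP _ _).1 (continuous_subspaceW h1' (hcont w)) x Sx).
  - pose f2 := fun M => - (lam * lam_min M + H w - F w (- M)) / lam.
    apply: (@subspace_eq_continuous _ S2 _ f2).
      move=> M _; rewrite /from_subspace /f2 (@inv0_aff _ _ _ lam (fun M => lam * lam_min M + H w - F w (- M)) M hlam) //.
      by move=> t; rewrite !addrA.
    apply/subspace_continuousP => x Sx.
    apply: cvgMr_tmp; apply: cvgN; apply: cvgD; last apply: cvgN.
      apply: cvgD; last exact: cvg_cst.
      apply: cvgMl_tmp.
      exact: ((subspace_continuousP _ _).1 (lam_min_within_cont hN sym2) x Sx).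
    have hF := (subspace_continuousP _ _).1 (hcont w) (- x) (h2 _ Sx).
    apply: (cvg_comp (fun M => - M) (F w) _ hF).
    move=> P hP.
    have hneg : (fun M : 'M[R]_N => - M) @ nbhs x --> - x by apply: cvgN; exact: cvg_id.
    have hP' : \forall z \near - x, D (w, z) -> P z by exact: hP.
    have hM := hneg _ hP'.
    move: hM; rewrite !nbhs_simpl /= => hM.
    apply: filterS hM => M hMq S2M; exact: hMq (h2 _ S2M).
  - move=> M X hM hX hXM.
    have hMs := sym1 _ hM; have hXs : X^T = X by have [] := hadm _ _ hX.
    have hu := hU w X M hw hX (h1 _ hM) hXM.
    have [c [c1 cX _]] := rayleigh hN hXs.
    have [c' [_ _ lowM]] := rayleigh hN hMs.
    have psd : forall x, 0 <= qf (M - X) x.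
      by move=> x; rewrite qfB subr_ge0; apply: loewner_qf.
    have tb := tr_bound c1 psd.
    have := lowM c; rewrite c1 mulr1.
    have -> : qf M c = qf X c + qf (M - X) c by rewrite qfB addrC subrK.
    rewrite (qf_eig cX) c1 mulr1 => h.
    have h3 : lam * (lam_min M - lam_min X) <= lam * \tr (M - X).
      by rewrite ler_pM2l //; lra.
    rewrite mulrBr in h3; lra.
  - move=> M Y hM hY hYM.
    have hMs := sym2 _ hM; have hYs : Y^T = Y by have [] := hadm _ _ hY.
    have hMY : loewner (- M) Y.
      apply: qf_loewner => v; rewrite qfN lerNl -qfN; exact: loewner_qf.
    have hu := hU w (- M) Y hw (h2 _ hM) hY hMY.
    rewrite opprK in hu.
    have [c [c1 [cY _]]] := rayleigh_max hN hYs.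
    have [c' [_ _ lowM]] := rayleigh hN hMs.
    have psd : forall x, 0 <= qf (Y + M) x.
      move=> x; rewrite qfD -lerBlDl sub0r -qfN; exact: loewner_qf.
    have tb := tr_bound c1 psd.
    have := lowM c; rewrite c1 mulr1 => h.
    rewrite qfD cY in tb.
    have h3 : lam * (lam_max Y + lam_min M) <= lam * \tr (Y + M).
      by rewrite ler_pM2l //; lra.
    rewrite mulrDr in h3; lra.
split; first exact: key.
split => // w hw S1 S2 h1 h2.
by exists (fun t M => lam * t - lam * lam_min M - H w - F w M),
  (fun t M => lam * t + lam * lam_min M + H w - F w (- M)); apply: key.
Qed.

Section Ex.
Variables (R : realType) (n : nat).
Hypothesis hn : (0 < n)%N.

Lemma nrm2_delta (i0 : 'I_n) : nrm2 (delta_mx 0 i0 : 'rV[R]_n) = 1.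
Proof.
rewrite nrm2E (bigD1 i0) //= big1 ?addr0.
  by rewrite !mxE !eqxx expr1n.
by move=> i /negbTE hi; rewrite !mxE hi andbF expr0n.
Qed.

Lemma eig_scalar (s : R) : [set a | eigenvalue (s%:M : 'M[R]_n) a] = [set s].
Proof.
pose i0 := Ordinal hn.
rewrite predeqE => a /=; split.
  move=> /eigenvalueP [v hv v0]; move: hv; rewrite mul_mx_scalar => /eqP.
  rewrite -subr_eq0 -scalerBl scaler_eq0 (negbTE v0) orbF subr_eq0 => /eqP ->.
  by [].
move=> ->; apply/eigenvalueP; exists (delta_mx 0 i0); first by rewrite mul_mx_scalar.
apply/eqP => h; have := nrm2_delta i0; rewrite h /nrm2 mul0mx mxE => /eqP.
by rewrite eq_sym oner_eq0.
Qed.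

Lemma lam_min_scalar (s : R) : lam_min (s%:M : 'M[R]_n) = s.
Proof. by rewrite /lam_min eig_scalar inf1. Qed.

Lemma lam_max_scalar (s : R) : lam_max (s%:M : 'M[R]_n) = s.
Proof. by rewrite /lam_max eig_scalar sup1. Qed.

Definition phi (t : R) : R := if 0 <= t then Num.sqrt t else t.

Lemma phi_props : {homo phi : s t / s < t} /\ bijective phi.
Proof.
split.
  move=> s t st; rewrite /phi.
  case: (lerP 0 s) => hs; case: (lerP 0 t) => ht.
  - by rewrite ltr_sqrt // (le_lt_trans hs st).
  - by move: (le_lt_trans hs (lt_trans st ht)); rewrite ltxx.
  - by apply: (lt_le_trans hs); rewrite sqrtr_ge0.
  - by [].
apply: (@Bijective _ _ _ (fun z : R => if 0 <= z then z ^+ 2 else z)) => z; rewrite /phi.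
  case: (lerP 0 z) => hz.
    by rewrite sqrtr_ge0 sqr_sqrtr.
  by rewrite leNgt hz.
case: (lerP 0 z) => hz.
  by rewrite sqr_ge0 sqrtr_sqr ger0_norm.
by rewrite leNgt hz.
Qed.

Lemma inv0_phi : Defs.inv0 (fun t (_ : 'M[R]_n) => phi t) = fun=> 0.
Proof.
apply/funext => M; rewrite /Defs.inv0; apply: xget_unique => /=.
  by rewrite /phi lexx sqrtr0.
move=> y; rewrite /phi; case: ifP => hy.
  by move=> /eqP; rewrite sqrtr_eq0 => hy'; apply/le_anti; rewrite hy hy'.
by [].
Qed.

End Ex.

Lemma part2 : forall (R : realType) (N : nat) (Om : set 'rV[R]_N),
     (0 < N)%N -> is_domain Om ->
     exists (D : set (omega R N * 'M[R]_N)) (F : omega R N -> 'M[R]_N -> R),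
       admissible_dom Om D /\ degenerate_elliptic D F /\
       classM Om D F /\ ~ classU Om D F.
Proof.
move=> R N Om hN [[x0 Ox0] _].
pose i0 := Ordinal hN.
pose D := [set p : omega R N * 'M[R]_N | Om p.1.1.1 /\ exists t : R, 0 <= t /\ p.2 = t%:M].
pose F := fun (w : omega R N) (X : 'M[R]_N) => - Num.sqrt (X i0 i0).
have Fs : forall w (t : R), F w t%:M = - Num.sqrt t.
  by move=> w t; rewrite /F mxE eqxx mulr1n.
have hcF : mat_continuous D F.
  move=> w; apply: continuous_subspaceT => X.
  have hc : {for X, continuous (fun X : 'M[R]_N => Num.sqrt (X i0 i0))}.
    apply: (@continuous_comp _ _ _ (fun X : 'M[R]_N => X i0 i0) (@Num.sqrt R)); [exact: coord_continuous | exact: sqrt_continuous].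
  exact: (cvgN hc).
exists D, F; split; [|split; [|split]].
- move=> w X [hw [t [t0 /= ->]]]; split => //.
  by rewrite /Defs.symmetric tr_scalar_mx.
- move=> w X Y [_ [s [s0 /= ->]]] [_ [t [t0 /= ->]]] hXY.
  rewrite !Fs lerN2 ler_wsqrtr //.
  have := loewner_qf hXY (delta_mx 0 i0).
  by rewrite !qf_scalar nrm2_delta !mulr1.
- split => // w hw S1 S2 h1 h2.
  exists (fun t _ => phi t), (fun t _ => phi t).
  split; [|split; [|split; [|split; [|split]]]].
  + by move=> M0 _; exact: phi_props.
  + by move=> M0 _; exact: phi_props.
  + by rewrite inv0_phi; apply: continuous_subspaceT; exact: cst_continuous.
  + by rewrite inv0_phi; apply: continuous_subspaceT; exact: cst_continuous.
  + move=> M X _ [_ [s [s0 /= ->]]] _.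
    by rewrite Fs opprK lam_min_scalar // /phi s0.
  + move=> M Y _ [_ [s [s0 /= ->]]] _.
    by rewrite Fs opprK lam_max_scalar // /phi s0.
- move=> [_ [lam [H [hlam [_ hU]]]]].
  pose w : omega R N := (x0, 0, 0).
  have hw : in_Omega3 Om w by [].
  have key : forall u : R, 0 <= u -> lam * (u ^+ 2) + H w <= u.
    move=> u u0.
    have hB : D (w, (0 : R)%:M) by split => //; exists 0.
    have hM : D (w, (u ^+ 2)%:M) by split => //; exists (u ^+ 2); rewrite sqr_ge0.
    have hBM : loewner ((0 : R)%:M : 'M[R]_N) ((u ^+ 2)%:M).
      by apply: qf_loewner => v; rewrite !qf_scalar mul0r mulr_ge0 ?sqr_ge0 ?nrm2_ge0.
    have := hU w _ _ hw hB hM hBM.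
    rewrite !Fs sqrtr0 oppr0 sub0r opprK sqrtr_sqr ger0_norm //.
    rewrite linearB /= !mxtrace_scalar mul0rn subr0 => h.
    apply: le_trans h; rewrite lerD2r ler_pM2l //.
    rewrite -mulr_natr ler_peMr ?sqr_ge0 //.
    by rewrite (ler_nat _ 1 N).
  pose h := `|H w|.
  have hH : - h <= H w by rewrite lerNl /h -normrN ler_norm.
  have h0 : 0 <= h by rewrite /h normr_ge0.
  pose u := (1 + h) / lam + 1.
  have hu : lam * u = 1 + h + lam by rewrite /u; field; rewrite gt_eqF.
  have u1 : 1 <= u by rewrite /u lerDr divr_ge0 // ?ltW //; lra.
  have := key u (le_trans ler01 u1).
  rewrite expr2 mulrA hu.
  nra.
Qed.

Theorem lemma1 :
  (* Class U is contained in Class M, via the explicit g1, g2 *)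
  (forall (R : realType) (N : nat) (Om : set 'rV[R]_N)
     (D : set (omega R N * 'M[R]_N)) (F : omega R N -> 'M[R]_N -> R)
     (lam : R) (H : omega R N -> R),
     (0 < N)%N -> is_domain Om -> admissible_dom Om D ->
     degenerate_elliptic D F -> mat_continuous D F ->
     0 < lam -> locally_bounded Om H -> classU_ineq Om D F lam H ->
     (forall w, in_Omega3 Om w ->
      forall S1 S2 : set 'M[R]_N,
        (forall M, S1 M -> D (w, M)) -> (forall M, S2 M -> D (w, - M)) ->
        classM_props D F w S1 S2
          (fun t M => lam * t - lam * lam_min M - H w - F w M)
          (fun t M => lam * t + lam * lam_min M + H w - F w (- M))) /\
     classM Om D F) /\
  (* the inclusion is proper *)
  (forall (R : realType) (N : nat) (Om : set 'rV[R]_N),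
     (0 < N)%N -> is_domain Om ->
     exists (D : set (omega R N * 'M[R]_N)) (F : omega R N -> 'M[R]_N -> R),
       admissible_dom Om D /\ degenerate_elliptic D F /\
       classM Om D F /\ ~ classU Om D F).
Proof. split; [exact: part1 | exact: part2]. Qed.
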